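(* Let $(G,g)$ be an eight-dimensional semi-Riemannian Lie group with a subgroup $K\cong\mathrm{SU}(2)\times\mathrm{SU}(2)$ generating a left-invariant conformal foliation $\mathcal F$ on $G$. Let $\mathfrak g=\mathfrak k\oplus\mathfrak m$ be the orthogonal decomposition of the Lie algebra of $G$ with $\mathfrak k=\mathfrak{su}(2)\times\mathfrak{su}(2)$, and let $\{A,B,C,R,S,T,X,Y\}$ be an orthonormal basis for $\mathfrak g$ such that $A,B,C$ span the first factor, $R,S,T$ the second, with $[A,B]=2C$, $[C,A]=2B$, $[B,C]=2A$, $[R,S]=2T$, $[T,R]=2S$, $[S,T]=2R$. In this setting the brackets have the form $[A,X]=-b_{11}B-c_{11}C$, $[A,Y]=-b_{21}B-c_{21}C$, $[B,X]=b_{11}A-c_{12}C$, $[B,Y]=b_{21}A-c_{22}C$, $[C,X]=c_{11}A+c_{12}B$, $[C,Y]=c_{21}A+c_{22}B$, $[R,X]=-s_{14}S-t_{14}T$, $[R,Y]=-s_{24}S-t_{24}T$, $[S,X]=s_{14}R-t_{15}T$, $[S,Y]=s_{24}R-t_{25}T$, $[T,X]=t_{14}R+t_{15}S$, $[T,Y]=t_{24}R+t_{25}S$ for real numbers $b_{ij},c_{ij},s_{ij},t_{ij}$. Then the foliation $\mathcal F$ is semi-Riemannian and minimal. It is totally geodesic if and only if $$0=(\varepsilon_B-\varepsilon_A)b_{11}=(\varepsilon_B-\varepsilon_A)b_{21}=(\varepsilon_C-\varepsilon_A)c_{11}=(\varepsilon_C-\varepsilon_A)c_{21}=(\varepsilon_C-\varepsilon_B)c_{12}=(\varepsilon_C-\varepsilon_B)c_{22},$$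 $$0=(\varepsilon_S-\varepsilon_R)s_{14}=(\varepsilon_S-\varepsilon_R)s_{24}=(\varepsilon_T-\varepsilon_R)t_{14}=(\varepsilon_T-\varepsilon_R)t_{24}=(\varepsilon_T-\varepsilon_S)t_{15}=(\varepsilon_T-\varepsilon_S)t_{25}.$$
   Context: A semi-Riemannian Lie group $(G,g)$ is a Lie group with a left-invariant non-degenerate metric $g$ of arbitrary signature; its Lie algebra is identified with the left-invariant vector fields. $K$ generates the left-invariant foliation $\mathcal F$ by left translates of $K$, with tangent distribution $\mathcal V$ spanned by $\mathfrak k$ and orthogonal complement $\mathcal H$ spanned by $\mathfrak m$; $\mathcal V,\mathcal H$ also denote orthogonal projections. Orthonormal means $g(E_i,E_j)=\varepsilon_{E_i}\delta_{ij}$, $\varepsilon_{E_i}=g(E_i,E_i)\in\{\pm1\}$. With $\nabla$ the Levi-Civita connection: $B^{\mathcal H}(E,F)=\tfrac12\mathcal V(\nabla_EF+\nabla_FE)$ ($E,F\in\mathcal H$), $B^{\mathcal V}(E,F)=\tfrac12\mathcal H(\nabla_EF+\nabla_FE)$ ($E,F\in\mathcal V$). $\mathcal F$ is conformal if $B^{\mathcal H}=g\otimes V$ for some vector field $V$ in $\mathcal V$, semi-Riemannian if $B^{\mathcal H}=0$, minimal if $\sum_k\varepsilon_{V_k}B^{\mathcal V}(V_k,V_k)=0$ for an orthonormal basis $\{V_k\}$ of $\mathcal V$, and totally geodesic if $B^{\mathcal V}=0$. *)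

(* Defs.v *)
(* The Lie algebra g of G is modelled as R^8 = 'rV[R]_8, the
   coordinates being taken in the orthonormal basis (A,B,C,R,S,T,X,Y),
   indices 0..7.  All objects are left-invariant, so the geometry reduces to
   the Lie algebra. *)
From HB Require Import structures.
From mathcomp Require Import all_boot all_order all_algebra.
Set Implicit Arguments. Unset Strict Implicit. Unset Printing Implicit Defensive.
Import Order.TTheory GRing.Theory Num.Theory.
Local Open Scope ring_scope.

Definition iA : 'I_8 := inord 0.
Definition iB : 'I_8 := inord 1.
Definition iC : 'I_8 := inord 2.
Definition iR : 'I_8 := inord 3.
Definition iS : 'I_8 := inord 4.
Definition iT : 'I_8 := inord 5.
Definition iX : 'I_8 := inord 6.
Definition iY : 'I_8 := inord 7.

Definition ebas {R : realFieldType} (i : 'I_8) : 'rV[R]_8 := delta_mx 0 i.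

Definition gmet {R : realFieldType} (eps : 'I_8 -> R) (u v : 'rV[R]_8) : R :=
  \sum_(i < 8) eps i * u 0 i * v 0 i.

Definition is_signature {R : realFieldType} (eps : 'I_8 -> R) : Prop :=
  forall i, eps i = 1 \/ eps i = -1.

(* orthogonal projections onto V = span(A,..,T) = k and H = span(X,Y) = m *)
Definition Vproj {R : realFieldType} (u : 'rV[R]_8) : 'rV[R]_8 :=
  \row_j (if (j < 6)%N then u 0 j else 0).
Definition Hproj {R : realFieldType} (u : 'rV[R]_8) : 'rV[R]_8 :=
  \row_j (if (j < 6)%N then 0 else u 0 j).

Definition lie_bracket {R : realFieldType}
    (br : 'rV[R]_8 -> 'rV[R]_8 -> 'rV[R]_8) : Prop :=
  (forall (a : R) u v w, br (a *: u + v) w = a *: br u w + br v w) /\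
  (forall u v, br u v = - br v u) /\
  (forall u v w, br u (br v w) + br v (br w u) + br w (br u v) = 0).

Definition su2su2_brackets {R : realFieldType}
    (br : 'rV[R]_8 -> 'rV[R]_8 -> 'rV[R]_8) : Prop :=
  (br (ebas iA) (ebas iB) = 2 *: ebas iC/\
      br (ebas iC) (ebas iA) = 2 *: ebas iB/\
      br (ebas iB) (ebas iC) = 2 *: ebas iA/\
      br (ebas iR) (ebas iS) = 2 *: ebas iT/\
      br (ebas iT) (ebas iR) = 2 *: ebas iS/\
      br (ebas iS) (ebas iT) = 2 *: ebas iR /\
      (forall i j : 'I_8, (i < 3)%N -> (3 <= j < 6)%N -> br (ebas i) (ebas j) = 0)).

Definition bracket_form {R : realFieldType}
    (br : 'rV[R]_8 -> 'rV[R]_8 -> 'rV[R]_8)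
    (b11 b21 c11 c21 c12 c22 s14 s24 t14 t24 t15 t25 : R) : Prop :=
  (br (ebas iA) (ebas iX) = - (b11 *: ebas iB) - c11 *: ebas iC/\
      br (ebas iA) (ebas iY) = - (b21 *: ebas iB) - c21 *: ebas iC/\
      br (ebas iB) (ebas iX) = b11 *: ebas iA - c12 *: ebas iC/\
      br (ebas iB) (ebas iY) = b21 *: ebas iA - c22 *: ebas iC/\
      br (ebas iC) (ebas iX) = c11 *: ebas iA + c12 *: ebas iB/\
      br (ebas iC) (ebas iY) = c21 *: ebas iA + c22 *: ebas iB /\
  (br (ebas iR) (ebas iX) = - (s14 *: ebas iS) - t14 *: ebas iT/\
      br (ebas iR) (ebas iY) = - (s24 *: ebas iS) - t24 *: ebas iT/\
      br (ebas iS) (ebas iX) = s14 *: ebas iR - t15 *: ebas iT/\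
      br (ebas iS) (ebas iY) = s24 *: ebas iR - t25 *: ebas iT/\
      br (ebas iT) (ebas iX) = t14 *: ebas iR + t15 *: ebas iS /\
      br (ebas iT) (ebas iY) = t24 *: ebas iR + t25 *: ebas iS)).

(* nabla is the Levi-Civita connection restricted to left-invariant fields:
   torsion free, and metric (g(Y,Z) is constant for left-invariant Y,Z) *)
Definition levi_civita {R : realFieldType} (eps : 'I_8 -> R)
    (br nabla : 'rV[R]_8 -> 'rV[R]_8 -> 'rV[R]_8) : Prop :=
  (forall u v, nabla u v - nabla v u = br u v) /\
  (forall u v w, gmet eps (nabla u v) w + gmet eps v (nabla u w) = 0).

Definition BH {R : realFieldType} (nabla : 'rV[R]_8 -> 'rV[R]_8 -> 'rV[R]_8)
    (u v : 'rV[R]_8) : 'rV[R]_8 := 2^-1 *: Vproj (nabla u v + nabla v u).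
Definition BV {R : realFieldType} (nabla : 'rV[R]_8 -> 'rV[R]_8 -> 'rV[R]_8)
    (u v : 'rV[R]_8) : 'rV[R]_8 := 2^-1 *: Hproj (nabla u v + nabla v u).

Definition conformal_fol {R : realFieldType} (eps : 'I_8 -> R)
    (nabla : 'rV[R]_8 -> 'rV[R]_8 -> 'rV[R]_8) : Prop :=
  exists V : 'rV[R]_8, Vproj V = V /\
    forall u v, Hproj u = u -> Hproj v = v -> BH nabla u v = gmet eps u v *: V.

Definition semi_riemannian_fol {R : realFieldType}
    (nabla : 'rV[R]_8 -> 'rV[R]_8 -> 'rV[R]_8) : Prop :=
  forall u v, Hproj u = u -> Hproj v = v -> BH nabla u v = 0.

Definition minimal_fol {R : realFieldType} (eps : 'I_8 -> R)
    (nabla : 'rV[R]_8 -> 'rV[R]_8 -> 'rV[R]_8) : Prop :=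
  \sum_(k < 8 | (k < 6)%N) eps k *: BV nabla (ebas k) (ebas k) = 0.

Definition totally_geodesic_fol {R : realFieldType}
    (nabla : 'rV[R]_8 -> 'rV[R]_8 -> 'rV[R]_8) : Prop :=
  forall u v, Vproj u = u -> Vproj v = v -> BV nabla u v = 0.

(* Main.v *)
Require Import Defs.
From HB Require Import structures.
From mathcomp Require Import all_boot all_order all_algebra.
From mathcomp Require Import ring lra.
Import Order.TTheory GRing.Theory Num.Theory.
Local Open Scope ring_scope.

Lemma vA : nat_of_ord iA = 0%N. Proof. by rewrite /iA inordK. Qed.
Lemma vB : nat_of_ord iB = 1%N. Proof. by rewrite /iB inordK. Qed.
Lemma vC : nat_of_ord iC = 2%N. Proof. by rewrite /iC inordK. Qed.
Lemma vR : nat_of_ord iR = 3%N. Proof. by rewrite /iR inordK. Qed.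
Lemma vS : nat_of_ord iS = 4%N. Proof. by rewrite /iS inordK. Qed.
Lemma vT : nat_of_ord iT = 5%N. Proof. by rewrite /iT inordK. Qed.
Lemma vX : nat_of_ord iX = 6%N. Proof. by rewrite /iX inordK. Qed.
Lemma vY : nat_of_ord iY = 7%N. Proof. by rewrite /iY inordK. Qed.

Lemma ord8_cases (P : 'I_8 -> Prop) j :
  P iA -> P iB -> P iC -> P iR -> P iS -> P iT -> P iX -> P iY -> P j.
Proof.
move=> pA pB pC pR pS pT pX pY; rewrite -(inord_val j).
by case: j => [[|[|[|[|[|[|[|[|m]]]]]]]] Hm].
Qed.

Lemma sum8 (R : realFieldType) (F : 'I_8 -> R) :
  \sum_(i < 8) F i = F iA + F iB + F iC + F iR + F iS + F iT + F iX + F iY.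
Proof.
rewrite (eq_bigr (fun i : 'I_8 => F (inord i))); last by move=> i _; rewrite inord_val.
rewrite -(big_mkord xpredT (fun n => F (inord n))) unlock /=.
rewrite /iA /iB /iC /iR /iS /iT /iX /iY; ring.
Qed.


Lemma ebasE (R : realFieldType) i j : (ebas i : 'rV[R]_8) 0 j = (nat_of_ord i == nat_of_ord j)%:R.
Proof. by rewrite mxE eqxx /= eq_sym. Qed.

Lemma gmetD (R : realFieldType) (eps : 'I_8 -> R) x y z :
  gmet eps (x + y) z = gmet eps x z + gmet eps y z.
Proof. rewrite /gmet -big_split; apply: eq_bigr => i _; by rewrite !mxE mulrDr mulrDl. Qed.
Lemma gmetN (R : realFieldType) (eps : 'I_8 -> R) x z :
  gmet eps (- x) z = - gmet eps x z.
Proof. rewrite /gmet -sumrN; apply: eq_bigr => i _; rewrite !mxE; ring. Qed.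
Lemma gmetC (R : realFieldType) (eps : 'I_8 -> R) x z :
  gmet eps x z = gmet eps z x.
Proof. rewrite /gmet; apply: eq_bigr => i _; ring. Qed.
Lemma gmet_e (R : realFieldType) (eps : 'I_8 -> R) x j :
  gmet eps x (ebas j) = eps j * x 0 j.
Proof.
rewrite /gmet (bigD1 j) //= big1 ?addr0 => [|i /negPf ne]; rewrite ebasE.
  by rewrite eqxx mulr1n mulr1.
have -> : (nat_of_ord j == nat_of_ord i) = false by rewrite val_eqE eq_sym.
by rewrite mulr0.
Qed.
Lemma gmet8 (R : realFieldType) (eps : 'I_8 -> R) x y :
  gmet eps x y = eps iA * x 0 iA * y 0 iA + eps iB * x 0 iB * y 0 iB
   + eps iC * x 0 iC * y 0 iC + eps iR * x 0 iR * y 0 iR + eps iS * x 0 iS * y 0 iS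
   + eps iT * x 0 iT * y 0 iT + eps iX * x 0 iX * y 0 iX + eps iY * x 0 iY * y 0 iY.
Proof. by rewrite /gmet sum8. Qed.

Definition V6 {R : realFieldType} (u : 'rV[R]_8) : 'rV[R]_8 :=
  u 0 iA *: ebas iA + u 0 iB *: ebas iB + u 0 iC *: ebas iC
  + u 0 iR *: ebas iR + u 0 iS *: ebas iS + u 0 iT *: ebas iT.
Definition H2 {R : realFieldType} (u : 'rV[R]_8) : 'rV[R]_8 :=
  u 0 iX *: ebas iX + u 0 iY *: ebas iY.

Ltac coords := rewrite ?mxE -?val_eqE /= ?vA ?vB ?vC ?vR ?vS ?vT ?vX ?vY /=.

Lemma vexp (R : realFieldType) (u : 'rV[R]_8) : Vproj u = u -> u = V6 u.
Proof.
move=> /rowP H; apply/rowP => j.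
have hX := H iX; have hY := H iY; move: hX hY; coords => hX hY.
elim/ord8_cases: j; rewrite /V6; coords;
rewrite -?hX -?hY; ring.
Qed.

Lemma hexp (R : realFieldType) (u : 'rV[R]_8) : Hproj u = u -> u = H2 u.
Proof.
move=> /rowP H; apply/rowP => j.
have hA := H iA; have hB := H iB; have hC := H iC;
have hR := H iR; have hS := H iS; have hT := H iT.
move: hA hB hC hR hS hT; coords => hA hB hC hR hS hT.
elim/ord8_cases: j; rewrite /H2; coords;
rewrite -?hA -?hB -?hC -?hR -?hS -?hT; ring.
Qed.

Section Br.
Lemma br0 (R : realFieldType) (br : 'rV[R]_8 -> 'rV[R]_8 -> 'rV[R]_8) :
  lie_bracket br -> forall w, br 0 w = 0.
Proof.
move=> [lin _] w; have h := lin 1 0 0 w; rewrite !scale1r addr0 in h.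
by apply/esym/(addrI (br 0 w)); rewrite addr0 -h.
Qed.
Lemma brD (R : realFieldType) (br : 'rV[R]_8 -> 'rV[R]_8 -> 'rV[R]_8) :
  lie_bracket br -> forall u v w, br (u + v) w = br u w + br v w.
Proof. move=> [lin _] u v w; have := lin 1 u v w; by rewrite !scale1r. Qed.
Lemma brZ (R : realFieldType) (br : 'rV[R]_8 -> 'rV[R]_8 -> 'rV[R]_8) :
  lie_bracket br -> forall a u w, br (a *: u) w = a *: br u w.
Proof.
move=> L a u w; have h := L.1 a u 0 w; by rewrite addr0 (br0 _ _ L) addr0 in h.
Qed.
Lemma brN (R : realFieldType) (br : 'rV[R]_8 -> 'rV[R]_8 -> 'rV[R]_8) :
  lie_bracket br -> forall u w, br (- u) w = - br u w.
Proof. move=> L u w; by rewrite -scaleN1r (brZ _ _ L) scaleN1r. Qed.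
Lemma brB (R : realFieldType) (br : 'rV[R]_8 -> 'rV[R]_8 -> 'rV[R]_8) :
  lie_bracket br -> forall u v w, br (u - v) w = br u w - br v w.
Proof. move=> L u v w; by rewrite (brD _ _ L) (brN _ _ L). Qed.
End Br.

Lemma koszul (R : realFieldType) (eps : 'I_8 -> R) br nabla :
  lie_bracket br -> levi_civita eps br nabla -> forall u v w,
  gmet eps (nabla u v + nabla v u) w = gmet eps (br w u) v + gmet eps (br w v) u.
Proof.
move=> [_ [anti _]] [tor met] u v w.
have M : forall a b c, gmet eps (nabla a b) c = - gmet eps (nabla a c) b.
  move=> a b c; have := met a b c; rewrite (gmetC _ _ b) => /eqP.
  by rewrite addr_eq0 => /eqP.
have Tn : forall a b c, gmet eps (nabla a b) c - gmet eps (nabla b a) c = gmet eps (br a b) c.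
  by move=> a b c; rewrite -tor gmetD gmetN.
have An : forall a b c, gmet eps (br a b) c = - gmet eps (br b a) c.
  by move=> a b c; rewrite anti gmetN.
rewrite gmetD.
have := M u v w; have := M v u w; have := M w u v; have := M u w v; have := M v w u; have := M w v u.
have := Tn u v w; have := Tn v w u; have := Tn w u v; have := Tn u w v; have := Tn w v u; have := Tn v u w.
have := An u v w; have := An v w u; have := An w u v; have := An u w v; have := An w v u; have := An v u w.
lra.
Qed.

Definition PX {R : realFieldType} (eps : 'I_8 -> R) (b11 c11 c12 s14 t14 t15 : R) (u v : 'rV[R]_8) : R :=
  (eps iB - eps iA) * b11 * (u 0 iB * v 0 iA + u 0 iA * v 0 iB)
+ (eps iC - eps iA) * c11 * (u 0 iC * v 0 iA + u 0 iA * v 0 iC)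
+ (eps iC - eps iB) * c12 * (u 0 iC * v 0 iB + u 0 iB * v 0 iC)
+ (eps iS - eps iR) * s14 * (u 0 iS * v 0 iR + u 0 iR * v 0 iS)
+ (eps iT - eps iR) * t14 * (u 0 iT * v 0 iR + u 0 iR * v 0 iT)
+ (eps iT - eps iS) * t15 * (u 0 iT * v 0 iS + u 0 iS * v 0 iT).

Lemma gmetZ (R : realFieldType) (eps : 'I_8 -> R) a x z :
  gmet eps (a *: x) z = a * gmet eps x z.
Proof. rewrite /gmet mulr_sumr; apply: eq_bigr => i _; rewrite !mxE; ring. Qed.
Lemma gmetB (R : realFieldType) (eps : 'I_8 -> R) x y z :
  gmet eps (x - y) z = gmet eps x z - gmet eps y z.
Proof. by rewrite gmetD gmetN. Qed.
Lemma gmet_e1 (R : realFieldType) (eps : 'I_8 -> R) x j :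
  gmet eps (ebas j) x = eps j * x 0 j.
Proof. by rewrite gmetC gmet_e. Qed.

Lemma V6E (R : realFieldType) (v : 'rV[R]_8) :
  (V6 v 0 iA = v 0 iA /\ V6 v 0 iB = v 0 iB /\ V6 v 0 iC = v 0 iC) /\
  (V6 v 0 iR = v 0 iR /\ V6 v 0 iS = v 0 iS /\ V6 v 0 iT = v 0 iT).
Proof. rewrite /V6; split; (split; [|split]); coords; ring. Qed.

Lemma coreXY (R : realFieldType) (eps : 'I_8 -> R)
    (br : 'rV[R]_8 -> 'rV[R]_8 -> 'rV[R]_8)
    (b11 b21 c11 c21 c12 c22 s14 s24 t14 t24 t15 t25 : R) :
  lie_bracket br ->
  bracket_form br b11 b21 c11 c21 c12 c22 s14 s24 t14 t24 t15 t25 ->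
  forall u v,
  gmet eps (br (ebas iX) (V6 u)) (V6 v) + gmet eps (br (ebas iX) (V6 v)) (V6 u)
    = PX eps b11 c11 c12 s14 t14 t15 u v /\
  gmet eps (br (ebas iY) (V6 u)) (V6 v) + gmet eps (br (ebas iY) (V6 v)) (V6 u)
    = PX eps b21 c21 c22 s24 t24 t25 u v.
Proof.
move=> L [hAX [hAY [hBX [hBY [hCX [hCY [hRX [hRY [hSX [hSY [hTX hTY]]]]]]]]]]] u v.
have anti := L.2.1.
have [[uA [uB uC]] [uR [uS uT]]] := V6E _ u; have [[wA [wB wC]] [wR [wS wT]]] := V6E _ v.
rewrite !(anti (ebas iX)) !(anti (ebas iY)) {1 3 5 7}/V6 !(brD _ _ L) !(brZ _ _ L).
rewrite hAX hAY hBX hBY hCX hCY hRX hRY hSX hSY hTX hTY.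
rewrite !(gmetN, gmetD, gmetB, gmetZ, gmet_e1).
rewrite uA uB uC uR uS uT wA wB wC wR wS wT /PX.
split; ring.
Qed.


Lemma entry (R : realFieldType) (eps : 'I_8 -> R) (x : 'rV[R]_8) j :
  is_signature eps -> x 0 j = eps j * gmet eps x (ebas j).
Proof.
move=> sig; rewrite gmet_e mulrA.
by case: (sig j) => ->; rewrite ?mulr1 ?mulrNN ?mulr1 ?mul1r.
Qed.

Lemma eps_neq0 (R : realFieldType) (eps : 'I_8 -> R) j :
  is_signature eps -> eps j != 0.
Proof. by move=> sig; case: (sig j) => ->; rewrite ?oppr_eq0 oner_eq0. Qed.

Lemma BVz (R : realFieldType) (eps : 'I_8 -> R)
    (br nabla : 'rV[R]_8 -> 'rV[R]_8 -> 'rV[R]_8)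
    (b11 b21 c11 c21 c12 c22 s14 s24 t14 t24 t15 t25 : R) :
  is_signature eps -> lie_bracket br -> levi_civita eps br nabla ->
  bracket_form br b11 b21 c11 c21 c12 c22 s14 s24 t14 t24 t15 t25 ->
  forall u v, Vproj u = u -> Vproj v = v ->
  (BV nabla u v = 0 <-> PX eps b11 c11 c12 s14 t14 t15 u v = 0 /\
                         PX eps b21 c21 c22 s24 t24 t25 u v = 0).
Proof.
move=> sig L LC BF u v Hu Hv.
have [cX cY] := coreXY _ eps _ _ _ _ _ _ _ _ _ _ _ _ _ L BF u v.
rewrite -(vexp _ _ Hu) -(vexp _ _ Hv) in cX cY.
have eX : (nabla u v + nabla v u) 0 iX = eps iX * PX eps b11 c11 c12 s14 t14 t15 u v.
  by rewrite (entry _ _ _ _ sig) (koszul _ _ _ _ L LC) cX.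
have eY : (nabla u v + nabla v u) 0 iY = eps iY * PX eps b21 c21 c22 s24 t24 t25 u v.
  by rewrite (entry _ _ _ _ sig) (koszul _ _ _ _ L LC) cY.
rewrite mxE in eX; rewrite mxE in eY.
split.
  move=> /rowP H; have hX := H iX; have hY := H iY.
  rewrite /BV !mxE vX vY /= in hX hY.
  have nX := eps_neq0 _ _ iX sig; have nY := eps_neq0 _ _ iY sig.
  move: hX hY; rewrite eX eY => /eqP hX /eqP hY.
  move: hX hY; rewrite !mulf_eq0 !invr_eq0 (negPf nX) (negPf nY) pnatr_eq0 /=.
  by move=> /eqP -> /eqP ->.
move=> [p1 p2]; apply/rowP => j; rewrite /BV.
elim/ord8_cases: j; rewrite !mxE ?vA ?vB ?vC ?vR ?vS ?vT ?vX ?vY /= ?mulr0 //.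
  by rewrite eX p1 !mulr0.
by rewrite eY p2 !mulr0.
Qed.

Lemma H2E (R : realFieldType) (v : 'rV[R]_8) :
  (H2 v 0 iA = 0 /\ H2 v 0 iB = 0 /\ H2 v 0 iC = 0) /\
  (H2 v 0 iR = 0 /\ H2 v 0 iS = 0 /\ H2 v 0 iT = 0).
Proof. rewrite /H2; split; (split; [|split]); coords; ring. Qed.

Lemma hz (R : realFieldType) (eps : 'I_8 -> R)
    (br : 'rV[R]_8 -> 'rV[R]_8 -> 'rV[R]_8)
    (b11 b21 c11 c21 c12 c22 s14 s24 t14 t24 t15 t25 : R) :
  lie_bracket br ->
  bracket_form br b11 b21 c11 c21 c12 c22 s14 s24 t14 t24 t15 t25 ->
  forall (j : 'I_8) u v, (j < 6)%N ->
  gmet eps (br (ebas j) (H2 u)) (H2 v) = 0.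
Proof.
move=> L [hAX [hAY [hBX [hBY [hCX [hCY [hRX [hRY [hSX [hSY [hTX hTY]]]]]]]]]]] j u v.
have anti := L.2.1.
have [[wA [wB wC]] [wR [wS wT]]] := H2E _ v.
elim/ord8_cases: j; rewrite ?vA ?vB ?vC ?vR ?vS ?vT ?vX ?vY //= => _;
rewrite anti /H2 !(brD _ _ L) !(brZ _ _ L) ![br (ebas iX) _]anti ![br (ebas iY) _]anti;
rewrite ?hAX ?hAY ?hBX ?hBY ?hCX ?hCY ?hRX ?hRY ?hSX ?hSY ?hTX ?hTY;
rewrite !(gmetN, gmetD, gmetB, gmetZ, gmet_e1);
rewrite ?wA ?wB ?wC ?wR ?wS ?wT; ring.
Qed.

Lemma vert_e (R : realFieldType) (k : 'I_8) : (k < 6)%N -> Vproj (ebas k : 'rV[R]_8) = ebas k.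
Proof.
move=> hk; apply/rowP => j; rewrite !mxE; case: ifP => // /negbT; rewrite -leqNgt => hj.
have -> : (j == k) = false.
  by apply/negbTE/eqP => e; move: hk; rewrite -e ltnNge hj.
by rewrite andbF.
Qed.

Lemma ltA : (iA < 6)%N. Proof. by rewrite vA. Qed.
Lemma ltB : (iB < 6)%N. Proof. by rewrite vB. Qed.
Lemma ltC : (iC < 6)%N. Proof. by rewrite vC. Qed.
Lemma ltR : (iR < 6)%N. Proof. by rewrite vR. Qed.
Lemma ltS : (iS < 6)%N. Proof. by rewrite vS. Qed.
Lemma ltT : (iT < 6)%N. Proof. by rewrite vT. Qed.

Theorem theorem6p3 (R : realFieldType) (eps : 'I_8 -> R)
    (br nabla : 'rV[R]_8 -> 'rV[R]_8 -> 'rV[R]_8)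
    (b11 b21 c11 c21 c12 c22 s14 s24 t14 t24 t15 t25 : R) :
  is_signature eps ->
  lie_bracket br ->
  su2su2_brackets br ->
  levi_civita eps br nabla ->
  conformal_fol eps nabla ->
  bracket_form br b11 b21 c11 c21 c12 c22 s14 s24 t14 t24 t15 t25 ->
  semi_riemannian_fol nabla /\
  minimal_fol eps nabla /\
  (totally_geodesic_fol nabla <->
     ((eps iB - eps iA) * b11 = 0 /\ (eps iB - eps iA) * b21 = 0 /\
      (eps iC - eps iA) * c11 = 0 /\ (eps iC - eps iA) * c21 = 0 /\
      (eps iC - eps iB) * c12 = 0 /\ (eps iC - eps iB) * c22 = 0) /\
     ((eps iS - eps iR) * s14 = 0 /\ (eps iS - eps iR) * s24 = 0 /\
      (eps iT - eps iR) * t14 = 0 /\ (eps iT - eps iR) * t24 = 0 /\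
      (eps iT - eps iS) * t15 = 0 /\ (eps iT - eps iS) * t25 = 0)).
Proof.
move=> sig L _ LC _ BF.
have BZ := BVz _ _ _ _ _ _ _ _ _ _ _ _ _ _ _ _ sig L LC BF.
split.
  move=> u v Hu Hv; apply/rowP => j; rewrite /BH !mxE.
  case: ifP => hj; last by rewrite mulr0.
  have e := entry _ _ (nabla u v + nabla v u) j sig.
  rewrite mxE in e; rewrite e (koszul _ _ _ _ L LC) (hexp _ _ Hu) (hexp _ _ Hv).
  rewrite !(hz _ eps _ _ _ _ _ _ _ _ _ _ _ _ _ L BF) //.
  by rewrite addr0 !mulr0.
split.
  rewrite /minimal_fol big1 // => k hk.
  have [_ ->] := BZ (ebas k) (ebas k) (vert_e _ _ hk) (vert_e _ _ hk); first by rewrite scaler0.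
  move: hk; elim/ord8_cases: k; rewrite ?vA ?vB ?vC ?vR ?vS ?vT ?vX ?vY //= => _;
  rewrite /PX; coords; split; ring.
split.
  move=> TG.
  have P (a b : 'I_8) : (a < 6)%N -> (b < 6)%N ->
     PX eps b11 c11 c12 s14 t14 t15 (ebas a) (ebas b) = 0 /\
     PX eps b21 c21 c22 s24 t24 t25 (ebas a) (ebas b) = 0.
    move=> ha hb; apply/(BZ _ _ (vert_e _ _ ha) (vert_e _ _ hb)).
    exact: TG (vert_e _ _ ha) (vert_e _ _ hb).
  have [hAB1 hAB2] := P iA iB ltA ltB.
  have [hAC1 hAC2] := P iA iC ltA ltC.
  have [hBC1 hBC2] := P iB iC ltB ltC.
  have [hRS1 hRS2] := P iR iS ltR ltS.
  have [hRT1 hRT2] := P iR iT ltR ltT.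
  have [hST1 hST2] := P iS iT ltS ltT.
  move: hAB1 hAB2 hAC1 hAC2 hBC1 hBC2 hRS1 hRS2 hRT1 hRT2 hST1 hST2.
  rewrite /PX; coords.
  move=> hAB1 hAB2 hAC1 hAC2 hBC1 hBC2 hRS1 hRS2 hRT1 hRT2 hST1 hST2.
  split; (split; [|split; [|split; [|split; [|split]]]]).
  - by apply: (etrans _ hAB1); ring.
  - by apply: (etrans _ hAB2); ring.
  - by apply: (etrans _ hAC1); ring.
  - by apply: (etrans _ hAC2); ring.
  - by apply: (etrans _ hBC1); ring.
  - by apply: (etrans _ hBC2); ring.
  - by apply: (etrans _ hRS1); ring.
  - by apply: (etrans _ hRS2); ring.
  - by apply: (etrans _ hRT1); ring.
  - by apply: (etrans _ hRT2); ring.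
  - by apply: (etrans _ hST1); ring.
  - by apply: (etrans _ hST2); ring.
move=> [[h1 [h2 [h3 [h4 [h5 h6]]]]] [h7 [h8 [h9 [h10 [h11 h12]]]]]] u v Hu Hv.
apply/(BZ _ _ Hu Hv); rewrite /PX.
by rewrite h1 h2 h3 h4 h5 h6 h7 h8 h9 h10 h11 h12 !mul0r !addr0.
Qed.
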